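(* Let $\mathbf Q\in\mathbb R^{m\times d}$ with rows $\mathbf q_i$, $\mathbf K\in\mathbb R^{n\times d}$ with rows $\mathbf k_l$, $\beta>0$, $h(\mathbf x,\mathbf y)=\exp(\beta\langle\mathbf x,\mathbf y\rangle)$, and $\mathbf A=h(\mathbf Q,\mathbf K)$. Let $\mathcal S\subseteq[n]$ with $|\mathcal S|=r$ and $\mathbf K_{\mathcal S}=(\mathbf k_l)_{l\in\mathcal S}$. Then $\widehat{\mathbf A}\defeq h(\mathbf Q,\mathbf K_{\mathcal S})\,h(\mathbf K_{\mathcal S},\mathbf K_{\mathcal S})^{+}\,h(\mathbf K_{\mathcal S},\mathbf K)$ has rank at most $r$ and, with $R_{\mathbf Q}\defeq\|\mathbf Q\|_{2,\infty}$, $$\|\mathbf A-\widehat{\mathbf A}\|_{2,\infty}^2\le\exp(\beta R_{\mathbf Q}^2)\,\|h_{\mathrm{res}}(\mathbf K,\mathbf K)\|_2,$$ where $h_{\mathrm{res}}(\mathbf K,\mathbf K)\defeq h(\mathbf K,\mathbf K)-h(\mathbf K,\mathbf K_{\mathcal S})h(\mathbf K_{\mathcal S},\mathbf K_{\mathcal S})^{+}h(\mathbf K_{\mathcal S},\mathbf K)$.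
   Context: For ordered tuples of vectors $\mathbf X=(\mathbf x_i)_{i}$, $\mathbf Y=(\mathbf y_l)_{l}$, $h(\mathbf X,\mathbf Y)$ denotes the matrix $(h(\mathbf x_i,\mathbf y_l))_{i,l}$. $\mathbf M^{+}$ is the Moore–Penrose pseudo-inverse, $\|\cdot\|_2$ the spectral norm, and $\|\mathbf M\|_{2,\infty}$ the maximal Euclidean norm of a row of $\mathbf M$. *)

(* Defs.v *)
From HB Require Import structures.
From mathcomp Require Import all_boot all_order all_algebra.
From mathcomp Require Import all_classical all_reals all_analysis.
Set Implicit Arguments. Unset Strict Implicit. Unset Printing Implicit Defensive.
Import Order.TTheory GRing.Theory Num.Theory.
Local Open Scope ring_scope.
Local Open Scope classical_set_scope.

Section Defs.
Variable R : realType.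

Definition hmat (beta : R) (p q d : nat) (X : 'M[R]_(p, d)) (Y : 'M[R]_(q, d))
  : 'M[R]_(p, q) :=
  \matrix_(i < p, l < q) expR (beta * \sum_(k < d) X i k * Y l k).

Definition vnorm (q : nat) (x : 'cV[R]_q) : R := Num.sqrt (\sum_(j < q) x j 0 ^+ 2).

Definition norm2inf (p q : nat) (M : 'M[R]_(p, q)) : R :=
  \big[Num.max/0]_(i < p) Num.sqrt (\sum_(j < q) M i j ^+ 2).

Definition specnorm (p q : nat) (M : 'M[R]_(p, q)) : R :=
  sup [set vnorm (M *m x) | x in [set x : 'cV[R]_q | vnorm x = 1]].

Definition penrose (p q : nat) (A : 'M[R]_(p, q)) (X : 'M[R]_(q, p)) : Prop :=
  [/\ A *m X *m A = A, X *m A *m X = X,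
      (A *m X)^T = A *m X & (X *m A)^T = X *m A].

Definition mpinv (p q : nat) (A : 'M[R]_(p, q)) : 'M[R]_(q, p) :=
  xget 0 [set X | penrose A X].

(* K_S : rows of K indexed by S, in the (increasing) enumeration order of S *)
Definition subrows (n d : nat) (K : 'M[R]_(n, d)) (S : {set 'I_n})
  : 'M[R]_(#|S|, d) := \matrix_(i < #|S|, j < d) K (enum_val i) j.

End Defs.

(* Main.v *)
Require Import Defs.
From HB Require Import structures.
From mathcomp Require Import all_boot all_order all_algebra.
From mathcomp Require Import all_classical all_reals all_analysis.
From mathcomp Require Import ring lra.
Import Order.TTheory GRing.Theory Num.Theory.
Local Open Scope ring_scope.
Set Implicit Arguments. Unset Strict Implicit. Unset Printing Implicit Defensive.

Section Aux.
Variable R : realType.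

Lemma discr (a b c : R) : 0 <= a ->
  (forall t, 0 <= a * t ^+ 2 + 2 * b * t + c) -> b ^+ 2 <= a * c.
Proof.
move=> a0 H.
have [a0'|ag0] := eqVneq a 0.
  subst a.
  have [b0|bn0] := eqVneq b 0; first by subst b; rewrite expr0n /= mul0r.
  have := H (- (c + 1) / (2 * b)).
  have -> : 0 * (- (c + 1) / (2 * b)) ^+ 2 + 2 * b * (- (c + 1) / (2 * b)) + c = -1.
    field; by rewrite ?pnatr_eq0 ?bn0 //=.
  by move=> h; lra.
have ap : 0 < a by rewrite lt_def ag0.
have := H (- b / a).
have -> : a * (- b / a) ^+ 2 + 2 * b * (- b / a) + c = (a * c - b ^+ 2) / a.
  by field.
by rewrite pmulr_lge0 ?invr_gt0 // subr_ge0.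
Qed.

Lemma CS n (x y : 'I_n -> R) :
  (\sum_j x j * y j) ^+ 2 <= (\sum_j x j ^+ 2) * (\sum_j y j ^+ 2).
Proof.
apply: discr; first by apply: sumr_ge0 => j _; rewrite sqr_ge0.
move=> t.
have -> : (\sum_j x j ^+ 2) * t ^+ 2 + 2 * (\sum_j x j * y j) * t + \sum_j y j ^+ 2
  = \sum_j (t * x j + y j) ^+ 2.
  rewrite mulr_suml big_distrr /= mulr_suml -!big_split /=.
  by apply: eq_bigr => j _; ring.
by apply: sumr_ge0 => j _; rewrite sqr_ge0.
Qed.

End Aux.

Section Aux.
Variable R : realType.

Lemma pow_psd N d (Z : 'M[R]_(N,d)) (c : 'I_N -> R) p :
  0 <= \sum_i \sum_j c i * c j * (\sum_k Z i k * Z j k) ^+ p.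
Proof.
have E : forall i j, (\sum_k Z i k * Z j k) ^+ p =
   \sum_(f : {ffun 'I_p -> 'I_d}) (\prod_t Z i (f t)) * (\prod_t Z j (f t)).
  move=> i j; rewrite -[p in LHS]card_ord -prodr_const bigA_distr_bigA.
  by apply: eq_bigr => f _; rewrite big_split.
have -> : \sum_i \sum_j c i * c j * (\sum_k Z i k * Z j k) ^+ p =
   \sum_(f : {ffun 'I_p -> 'I_d}) (\sum_i c i * \prod_t Z i (f t)) ^+ 2.
  symmetry.
  under eq_bigr => f _ do rewrite expr2 mulr_suml.
  under eq_bigr => f _ do under eq_bigr => i _ do rewrite mulr_sumr.
  rewrite exchange_big; apply: eq_bigr => i _; rewrite exchange_big; apply: eq_bigr => j _.
  rewrite E mulr_sumr; apply: eq_bigr => f _; ring.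
by apply: sumr_ge0 => f _; rewrite sqr_ge0.
Qed.

Lemma exp_psd (beta : R) (hb : 0 <= beta) N d (Z : 'M[R]_(N,d)) (c : 'I_N -> R) :
  0 <= \sum_i \sum_j c i * c j * expR (beta * \sum_k Z i k * Z j k).
Proof.
set x := fun i j => beta * \sum_k Z i k * Z j k.
have cv : ((fun n => \sum_i \sum_j c i * c j * series (exp_coeff (x i j)) n) @ \oo
   --> \sum_i \sum_j c i * c j * expR (x i j))%classic.
  apply: (cvg_big add_continuous) => // i _.
  apply: (cvg_big add_continuous) => // j _.
  apply: cvgMl_tmp; exact: is_cvg_series_exp_coeff.
apply: (cvgr_to_ge cv); apply: nearW => n.
have -> : \sum_i \sum_j c i * c j * series (exp_coeff (x i j)) n =
  \sum_(0 <= k < n) (beta ^+ k / k`!%:R) *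
     \sum_i \sum_j c i * c j * (\sum_l Z i l * Z j l) ^+ k.
  rewrite /series /=.
  under eq_bigr => i _ do under eq_bigr => j _ do rewrite mulr_sumr.
  under eq_bigr => i _ do rewrite exchange_big /=.
  rewrite exchange_big /=; apply: eq_bigr => k _.
  rewrite mulr_sumr; apply: eq_bigr => i _; rewrite mulr_sumr; apply: eq_bigr => j _.
  rewrite /exp_coeff /x /= exprMn; ring.
apply: sumr_ge0 => k _; apply: mulr_ge0; last exact: pow_psd.
by rewrite divr_ge0 // exprn_ge0.
Qed.
End Aux.

Section M.
Variable R : realType.
Variable beta : R.

Lemma hmat_tr p q d (X : 'M[R]_(p,d)) (Y : 'M[R]_(q,d)) :
  (hmat beta X Y)^T = hmat beta Y X.
Proof.
apply/matrixP => i j; rewrite !mxE; congr expR; congr (_ * _).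
by apply: eq_bigr => k _; rewrite mulrC.
Qed.

Lemma hmat_colL p1 p2 q d (A : 'M[R]_(p1,d)) (B : 'M[R]_(p2,d)) (Y : 'M[R]_(q,d)) :
  hmat beta (col_mx A B) Y = col_mx (hmat beta A Y) (hmat beta B Y).
Proof.
apply/matrixP => i j; case: (split_ordP i) => k ->;
  rewrite ?col_mxEu ?col_mxEd !mxE; congr expR; congr (_ * _);
  apply: eq_bigr => l _; by rewrite ?col_mxEu ?col_mxEd.
Qed.

Lemma hmat_colR p q1 q2 d (X : 'M[R]_(p,d)) (A : 'M[R]_(q1,d)) (B : 'M[R]_(q2,d)) :
  hmat beta X (col_mx A B) = row_mx (hmat beta X A) (hmat beta X B).
Proof.
apply/matrixP => i j; case: (split_ordP j) => k ->;
  rewrite ?row_mxEl ?row_mxEr !mxE; congr expR; congr (_ * _);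
  apply: eq_bigr => l _; by rewrite ?col_mxEu ?col_mxEd.
Qed.

Lemma hmat_row p q d (X : 'M[R]_(p,d)) (Y : 'M[R]_(q,d)) i :
  row i (hmat beta X Y) = hmat beta (row i X) Y.
Proof. by apply/matrixP => a j; rewrite !mxE; congr expR; congr (_ * _); apply: eq_bigr => k _; rewrite !mxE. Qed.

Lemma psd_hmat (hb : 0 <= beta) N d (Z : 'M[R]_(N,d)) (c : 'cV[R]_N) :
  0 <= (c^T *m hmat beta Z Z *m c) 0 0.
Proof.
have -> : (c^T *m hmat beta Z Z *m c) 0 0 =
  \sum_i \sum_j c i 0 * c j 0 * expR (beta * \sum_k Z i k * Z j k).
  rewrite !mxE exchange_big /=; apply: eq_bigr => i _.
  rewrite !mxE mulr_suml; apply: eq_bigr => j _; rewrite !mxE; ring.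
exact: (exp_psd hb Z (fun i => c i 0)).
Qed.

End M.

Section P.
Variable R : realType.

Lemma penrose_uniq p q (A : 'M[R]_(p,q)) X Y : penrose A X -> penrose A Y -> X = Y.
Proof.
case=> h1 h2 h3 h4 [g1 g2 g3 g4].
have eX : X = X *m A *m Y.
  rewrite -{1}h2 -mulmxA -h3.
  have -> : A *m X = A *m Y *m (A *m X) by rewrite mulmxA g1.
  by rewrite trmx_mul h3 g3 !mulmxA h2.
have e : Y *m A = X *m A *m (Y *m A).
  transitivity ((Y *m A *m (X *m A))^T).
    by rewrite -mulmxA (mulmxA A X A) h1 g4.
  by rewrite trmx_mul h4 g4.
have eY : Y = X *m A *m Y.
  by rewrite -{1}g2 e -mulmxA g2.
by rewrite eX -eY.
Qed.

Lemma penrose_sym r (G P : 'M[R]_r) : G^T = G -> penrose G P -> P^T = P.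
Proof.
move=> hG hp; apply: (penrose_uniq _ hp); case: hp => h1 h2 h3 h4; split.
- by have := congr1 trmx h1; rewrite !trmx_mul hG mulmxA.
- by have := congr1 trmx h2; rewrite !trmx_mul hG mulmxA.
- by rewrite trmx_mul trmxK hG -h4 trmx_mul hG.
- by rewrite trmx_mul trmxK hG -h3 trmx_mul hG.
Qed.

Lemma qf_block m1 m2 (A : 'M[R]_m1) B C (D : 'M[R]_m2) (u : 'cV_m1) (v : 'cV_m2) :
 (col_mx u v)^T *m block_mx A B C D *m col_mx u v =
   u^T *m A *m u + v^T *m C *m u + (u^T *m B *m v + v^T *m D *m v).
Proof. by rewrite tr_col_mx mul_row_block mul_row_col !mulmxDl. Qed.

Lemma schur r p (G : 'M[R]_r) (B : 'M[R]_(r,p)) (C : 'M[R]_p) (P : 'M[R]_r) :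
  P^T = P -> P *m G *m P = P ->
  (forall (x : 'cV[R]_r) (y : 'cV[R]_p), 0 <= ((col_mx x y)^T *m block_mx G B B^T C *m col_mx x y) 0 0) ->
  forall y : 'cV[R]_p, 0 <= (y^T *m (C - B^T *m P *m B) *m y) 0 0.
Proof.
move=> hP hPGP H y; have := H (- (P *m B *m y)) y.
rewrite qf_block.
have ex : (- (P *m B *m y))^T = - (y^T *m B^T *m P).
  by rewrite linearN /= !trmx_mul hP mulmxA.
have e : forall k (M : 'M[R]_(k,r)), M *m P *m G *m P = M *m P.
  by move=> k M; rewrite -!mulmxA (mulmxA P G P) hPGP.
rewrite ex !mulmxN !mulNmx !opprK !mulmxA e mulmxBr mulmxBl !mulmxA.
set t := y^T *m B^T *m P *m B *m y.
set c := y^T *m C *m y.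
suff -> : t + - t + (- t + c) = c - t by [].
by rewrite addrN add0r addrC.
Qed.
End P.

Section S.
Variable R : realType.
Local Open Scope classical_set_scope.

Lemma vnorm_le_spec n (H : 'M[R]_n) (x : 'cV[R]_n) :
  vnorm x = 1 -> vnorm (H *m x) <= specnorm H.
Proof.
move=> hx; apply: ub_le_sup; last by exists x.
exists (Num.sqrt (\sum_i \sum_j H i j ^+ 2)) => _ [z hz <-].
have hz1 : \sum_j z j 0 ^+ 2 = 1.
  move: hz; rewrite /= /vnorm => hz.
  by rewrite -(@sqr_sqrtr _ (\sum_j z j 0 ^+ 2)) ?hz ?expr1n //; apply: sumr_ge0 => j _; rewrite sqr_ge0.
rewrite /vnorm ler_sqrt; last by apply: sumr_ge0 => i _; apply: sumr_ge0 => j _; rewrite sqr_ge0.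
apply: ler_sum => i _; rewrite mxE.
apply: le_trans (CS (fun j => H i j) (fun j => z j 0)) _.
by rewrite hz1 mulr1.
Qed.

Lemma specnorm_ge0 n (H : 'M[R]_n) : 0 <= specnorm H.
Proof.
case: (pselect (exists x : 'cV[R]_n, vnorm x = 1)) => [[x hx]|nx].
  apply: le_trans (vnorm_le_spec H hx); exact: sqrtr_ge0.
rewrite /specnorm (_ : [set _ | x in _] = set0) ?sup0 //.
by apply/seteqP; split => // z [x hx _]; apply: nx; exists x.
Qed.

Lemma qf_le_vnorm n (H : 'M[R]_n) (u : 'cV[R]_n) :
  vnorm u = 1 -> (u^T *m H *m u) 0 0 <= vnorm (H *m u).
Proof.
move=> hu.
have hu1 : \sum_j u j 0 ^+ 2 = 1.
  by rewrite -(@sqr_sqrtr _ (\sum_j u j 0 ^+ 2)) -/(vnorm u) ?hu ?expr1n //; apply: sumr_ge0 => j _; rewrite sqr_ge0.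
rewrite -mulmxA mxE.
under eq_bigr => j _ do rewrite mxE.
apply: le_trans (ler_norm _) _; rewrite -sqrtr_sqr /vnorm ler_sqrt; last by apply: sumr_ge0 => i _; rewrite sqr_ge0.
by apply: le_trans (CS _ _) _; rewrite hu1 mul1r.
Qed.

Lemma sc00 (a : R) (M : 'M[R]_1) : (a *: M) 0 0 = a * M 0 0.
Proof. by rewrite mxE. Qed.

Lemma qf_le_spec n (H : 'M[R]_n) (v : 'cV[R]_n) :
  (v^T *m H *m v) 0 0 <= (\sum_j v j 0 ^+ 2) * specnorm H.
Proof.
set s := \sum_j v j 0 ^+ 2.
have s0 : 0 <= s by apply: sumr_ge0 => j _; rewrite sqr_ge0.
have [se|sn] := eqVneq s 0.
  have -> : v = 0.
    apply/matrixP => i j; rewrite ord1 mxE.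
    by have := psumr_eq0P (fun j _ => sqr_ge0 (v j 0)) se (i := i) isT => /eqP; rewrite sqrf_eq0 => /eqP.
  by rewrite se mul0r mulmx0 mxE.
set nu := Num.sqrt s.
have nup : 0 < nu by rewrite sqrtr_gt0 lt_def sn s0.
set u := nu^-1 *: v.
have hu : vnorm u = 1.
  rewrite /vnorm (_ : \sum_j _ = 1) ?sqrtr1 //.
  under eq_bigr => j _ do rewrite mxE exprMn.
  by rewrite -mulr_sumr -/s -[s in _ * s](@sqr_sqrtr _ s) // -exprMn mulVf ?expr1n // gt_eqF.
have -> : v = nu *: u by rewrite /u scalerA mulfV ?scale1r // gt_eqF.
rewrite linearZ /= [(nu *: u)^T]linearZ /= -!scalemxAl !sc00.
rewrite -[s in _ <= s * _](@sqr_sqrtr _ s) // -/nu expr2 -mulrA ler_pM2l // ler_pM2l //.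
exact: le_trans (qf_le_vnorm H hu) (vnorm_le_spec H hu).

Qed.

End S.

Section B.
Variable R : realType.

Lemma add00 (M N : 'M[R]_1) : (M + N) 0 0 = M 0 0 + N 0 0.
Proof. by rewrite mxE. Qed.

Lemma block_bound n (al : 'M[R]_1) (a : 'M[R]_(1,n)) (H : 'M[R]_n) :
  (forall y : 'cV[R]_(1+n), 0 <= (y^T *m block_mx al a a^T H *m y) 0 0) ->
  \sum_j a 0 j ^+ 2 <= al 0 0 * specnorm H.
Proof.
move=> hp.
set N := \sum_j a 0 j ^+ 2.
have NE : (a *m a^T) 0 0 = N by rewrite mxE; apply: eq_bigr => j _; rewrite mxE expr2.
set Qa := (a *m H *m a^T) 0 0.
have key : forall t, 0 <= al 0 0 * t ^+ 2 + 2 * N * t + Qa.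
  move=> t; have := hp (col_mx t%:M a^T); rewrite qf_block tr_scalar_mx trmxK.
  rewrite !mul_mx_scalar !mul_scalar_mx -!scalemxAl !add00 !sc00 NE -/Qa.
  suff -> : t * (t * al 0 0) + t * N + (t * N + Qa) = al 0 0 * t ^+ 2 + 2 * N * t + Qa by [].
  ring.
have al0 : 0 <= al 0 0.
  have := hp (col_mx 1%:M 0); rewrite qf_block !trmx0 !mulmx0 !mul0mx !addr0 tr_scalar_mx.
  by rewrite mul_mx_scalar mul_scalar_mx !sc00 !mul1r.
have d := discr al0 key.
have hQ : Qa <= N * specnorm H.
  have := qf_le_spec H a^T; rewrite trmxK -/Qa.
  suff -> : \sum_j a^T j 0 ^+ 2 = N by [].
  by apply: eq_bigr => j _; rewrite mxE.
have s0 := specnorm_ge0 H.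
have N0 : 0 <= N by apply: sumr_ge0 => j _; rewrite sqr_ge0.
have [->|Nn] := eqVneq N 0; first by rewrite mulr_ge0.
have Np : 0 < N by rewrite lt_def Nn N0.
have h2 : N ^+ 2 <= al 0 0 * (N * specnorm H) by apply: le_trans d _; exact: ler_wpM2l.
nra.
Qed.
End B.


Lemma norm2inf_ge0 (R : realType) p q (M : 'M[R]_(p,q)) : 0 <= norm2inf M.
Proof.
rewrite /norm2inf; elim/big_ind: _ => //.
  by move=> x y hx hy; rewrite le_max hx.
Qed.

Lemma sub00 (R : realType) (M N : 'M[R]_1) : (M - N) 0 0 = M 0 0 - N 0 0.
Proof. by rewrite !mxE. Qed.

Unset Implicit Arguments. Set Strict Implicit. Set Printing Implicit Defensive.

Theorem lemma2 (R : realType) (m n d r : nat) (Q : 'M[R]_(m, d))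
  (K : 'M[R]_(n, d)) (beta : R) (hbeta : 0 < beta)
  (S : {set 'I_n}) (hS : #|S| = r) :
  let A := hmat beta Q K in
  let KS := subrows K S in
  let Ahat := hmat beta Q KS *m mpinv (hmat beta KS KS) *m hmat beta KS K in
  let hres := hmat beta K K - hmat beta K KS *m mpinv (hmat beta KS KS) *m hmat beta KS K in
  (\rank Ahat <= r)%N /\
  norm2inf (A - Ahat) ^+ 2 <= expR (beta * norm2inf Q ^+ 2) * specnorm hres.
Proof.
move=> A KS Ahat hres; split.
  apply: leq_trans (mxrankM_maxl _ _) _; apply: leq_trans (mxrankM_maxl _ _) _.
  by rewrite -hS; exact: rank_leq_col.
have hb0 : 0 <= beta by exact: ltW.
set G := hmat beta KS KS.
set P := mpinv G.
have hG : G^T = G by rewrite hmat_tr.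
have [hPs hPGP] : P^T = P /\ P *m G *m P = P.
  rewrite /P /mpinv; case: xgetP => [X _ hX|_]; last by rewrite trmx0 mulmx0.
  have hX2 : penrose G X := hX.
  split; first exact: (penrose_sym hG hX2).
  by case: hX2.
have eP : forall k (M : 'M[R]_(k,#|S|)), M *m P *m G *m P = M *m P.
  by move=> k M; rewrite -!mulmxA (mulmxA P G P) hPGP.
set E := expR (beta * norm2inf Q ^+ 2).
set sg := specnorm hres.
have sg0 : 0 <= sg by exact: specnorm_ge0.
have E0 : 0 <= E by exact: expR_ge0.
have row_bound : forall i, \sum_j (A - Ahat) i j ^+ 2 <= E * sg.
  move=> i.
  set q := row i Q.
  set Y := col_mx q K.
  set B := hmat beta KS Y.
  set C := hmat beta Y Y.
  have big : forall (x : 'cV[R]_#|S|) (y : 'cV[R]_(1 + n)),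
      0 <= ((col_mx x y)^T *m block_mx G B B^T C *m col_mx x y) 0 0.
    move=> x y; have := psd_hmat hb0 (col_mx KS Y) (col_mx x y).
    by rewrite hmat_colL [hmat _ KS (col_mx KS Y)]hmat_colR [hmat _ Y (col_mx KS Y)]hmat_colR -block_mxEv /B hmat_tr.
  have sch := schur hPs hPGP big.
  set al := hmat beta q q - hmat beta q KS *m P *m hmat beta KS q.
  set a := hmat beta q K - hmat beta q KS *m P *m hmat beta KS K.
  have eblk : C - B^T *m P *m B = block_mx al a a^T hres.
    have eC : C = block_mx (hmat beta q q) (hmat beta q K) (hmat beta K q) (hmat beta K K).
      by rewrite /C /Y hmat_colL !hmat_colR -block_mxEv.
    have eB : B = row_mx (hmat beta KS q) (hmat beta KS K) by rewrite /B /Y hmat_colR.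
    have eBt : B^T = col_mx (hmat beta q KS) (hmat beta K KS) by rewrite eB tr_row_mx !hmat_tr.
    rewrite eC eBt eB mul_col_mx mul_col_row opp_block_mx add_block_mx.
    congr block_mx.
    rewrite /a linearB /= !trmx_mul !hmat_tr hPs mulmxA.
    by [].
  have psd' : forall y : 'cV[R]_(1+n), 0 <= (y^T *m block_mx al a a^T hres *m y) 0 0.
    by move=> y; rewrite -eblk; exact: sch.
  have hbb := block_bound psd'.
  have ra' : row i (A - Ahat) = a by rewrite linearB /= /Ahat !row_mul !hmat_row.
  have ra : forall j, (A - Ahat) i j = a 0 j by move=> j; rewrite -ra' [RHS]mxE.
  under eq_bigr => j _ do rewrite ra.
  apply: le_trans hbb _; apply: (ler_wpM2r sg0).
  have alle : al 0 0 <= hmat beta q q 0 0.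
    rewrite /al sub00 gerBl -[hmat beta q KS]hmat_tr.
    have := psd_hmat hb0 KS (P *m hmat beta KS q).
    by rewrite -/G trmx_mul hPs !mulmxA eP.
  apply: le_trans alle _.
  rewrite mxE /E ler_expR ler_pM2l //.
  under eq_bigr => k _ do rewrite !mxE.
  have h1 := le_bigmax 0 (fun i => Num.sqrt (\sum_(j < d) Q i j ^+ 2)) i.
  rewrite -/(norm2inf Q) /= in h1.
  have s0 : 0 <= \sum_(j < d) Q i j ^+ 2 by apply: sumr_ge0 => j _; rewrite sqr_ge0.
  rewrite -(sqr_sqrtr s0) expr2 [X in _ <= X]expr2.
  by apply: ler_pM => //; exact: sqrtr_ge0.
have hn : norm2inf (A - Ahat) <= Num.sqrt (E * sg).
  rewrite /norm2inf; apply: bigmax_le; first exact: sqrtr_ge0.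
  by move=> i _; rewrite ler_sqrt ?mulr_ge0 //; exact: row_bound.
rewrite -(sqr_sqrtr (mulr_ge0 E0 sg0)) expr2 [X in _ <= X]expr2.
by apply: ler_pM => //; exact: norm2inf_ge0.
Qed.
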